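(* Let $\vdash$ be a protoalgebraic logic and $\Phi$ a Sahlqvist quasiequation compatible with $\vdash$. The following are equivalent: (i) $\vdash$ validates all metarules in $\mathsf{R}_\vdash(\Phi)$; (ii) the semilattice $\mathsf{Th}^\omega(\vdash)$ validates $\Phi$; (iii) the semilattice $\mathsf{Fi}^\omega_\vdash(\boldsymbol{A})$ validates $\Phi$ for every algebra $\boldsymbol{A}$.
   Context: A logic $\vdash$ is a finitary, substitution-invariant consequence relation on the set $Fm(\vdash)$ of formulas (over countably many variables) of an algebraic language; all algebras are of the same type. A finite set $\Gamma$ is inconsistent if $\Gamma\vdash\varphi$ for all $\varphi$. $\vdash$ is protoalgebraic if there is a nonempty finite $\Delta(x,y)$ with $\emptyset\vdash\Delta(x,x)$ and $x,\Delta(x,y)\vdash y$. $\vdash$ has the inconsistency lemma (IL) if for each $n\ge1$ there is a finite set $\sim_n(x_1,\dots,x_n)$ with: $\Gamma\cup\{\varphi_1,\dots,\varphi_n\}$ inconsistent iff $\Gamma\vdash\sim_n(\varphi_1,\dots,\varphi_n)$ (finite $\Gamma$); the deduction theorem (DT) if for all $n,m\ge1$ there is a finite set $(x_1..x_n)\Rightarrow_{nm}(y_1..y_m)$ with $\Gamma,\varphi_1..\varphi_n\vdash\psi_1..\psi_m$ iff $\Gamma\vdash(\varphi_1..\varphi_n)\Rightarrow_{nm}(\psi_1..\psi_m)$; the proof by cases (PC) if for all $n,m$ there is a finite set $(x_1..x_n)\curlyvee_{nm}(y_1..y_m)$ with [$\Gamma,\varphi_1..\varphi_n\vdash\gamma$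 and $\Gamma,\psi_1..\psi_m\vdash\gamma$] iff $\Gamma,(\varphi_1..\varphi_n)\curlyvee_{nm}(\psi_1..\psi_m)\vdash\gamma$ (finite sets). Fix such witnessing sets when they exist, and fix a theorem $\top(x)$ of $\vdash$ (one exists when $\vdash$ is protoalgebraic). Formulas of $\mathsf{IPC}$ use $\land,\lor,\to,\lnot,0,1$. Such a formula is compatible with $\vdash$ if: $\vdash$ has IL whenever $0$ or $\lnot$ occurs, DT whenever $\to$ occurs, PC whenever $\lor$ occurs. For compatible $\varphi(x_1..x_n)$ and $k\ge1$ define a finite set $\boldsymbol{\varphi}^k(x_1^1..x_1^k,\dots,x_n^1..x_n^k)$ of formulas of $\vdash$ recursively: $\boldsymbol{x_m}^k=\{x_m^1..x_m^k\}$; $\boldsymbol{1}^k=\{\top(x_1^1)\}$; $\boldsymbol{0}^k=\{x_1^1\}\cup\sim_1(x_1^1)$; $(\boldsymbol{\psi\land\chi})^k=\boldsymbol{\psi}^k\cup\boldsymbol{\chi}^k$; if $\boldsymbol{\psi}^k=\{\psi_1..\psi_m\}$ and $\boldsymbol{\chi}^k=\{\chi_1..\chi_t\}$ then $(\boldsymbol{\lnot\psi})^k=\sim_m(\psi_1..\psi_m)$, $(\boldsymbol{\psi\to\chi})^k=(\psi_1..\psi_m)\Rightarrow_{mt}(\chi_1..\chi_t)$, $(\boldsymbol{\psi\lor\chi})^k=(\psi_1..\psi_m)\curlyvee_{mt}(\chi_1..\chi_t)$. Sahlqvist quasiequations: a variable occurrence is positive (negative) if the number of negations and antecedents of implications in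 whose scope it lies is even (odd); positive/negative formulas have all occurrences so. Sahlqvist antecedent: built from variables, negative formulas, $0,1$ using $\land,\lor$. Sahlqvist implication: positive formula, or $\lnot\varphi$ ($\varphi$ Sahlqvist antecedent), or $\varphi\to\psi$ ($\varphi$ Sahlqvist antecedent, $\psi$ positive). A Sahlqvist quasiequation is $\Phi=\varphi_1(x_1..x_n)\land y\le z\,\&\cdots\&\,\varphi_m(x_1..x_n)\land y\le z\Longrightarrow y\le z$ with $y,z$ distinct variables not in the $\varphi_i$, each $\varphi_i$ built from Sahlqvist implications by $\land,\lor$, and $a\le b$ meaning $a\land b\approx a$; it is compatible with $\vdash$ if all $\varphi_i$ are. $\mathsf{R}_\vdash(\Phi)$ is the set of metarules: from $\Gamma,\boldsymbol{\varphi_i}^k(\gamma_1^1..\gamma_1^k,\dots,\gamma_n^1..\gamma_n^k)\vdash\psi$ for all $i\le m$, infer $\Gamma\vdash\psi$, for every $k\ge1$ and finite $\Gamma\cup\{\psi\}\cup\{\gamma_i^j\}\subseteq Fm(\vdash)$. A deductive filter of $\vdash$ on $\boldsymbol{A}$ is $F\subseteq A$ such that whenever $\Gamma\vdash\varphi$ and $h\colon\boldsymbol{Fm}(\vdash)\to\boldsymbol{A}$ is a homomorphism with $h[\Gamma]\subseteq F$, then $h(\varphi)\in F$; $\mathrm{Fg}(X)$ is the least deductive filter containing $X$. $\mathsf{Fi}^\omega_\vdash(\boldsymbol{A})$ is the set of finitely generated deductive filters, a semilattice under $F+G=\mathrm{Fg}(F\cup G)$ whose order is $\supseteq$; $\mathsf{Th}^\omega(\vdash)=\mathsf{Fi}^\omega_\vdash(\boldsymbol{Fm}(\vdash))$.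 A formula compatible with protoalgebraic $\vdash$ is interpreted in $\mathsf{Fi}^\omega_\vdash(\boldsymbol{A})$ as follows: $\land$ as $+$; $1$ as $\mathrm{Fg}(\emptyset)$; with IL, $\lnot\mathrm{Fg}(a_1..a_n)=\mathrm{Fg}(\sim_n^{\boldsymbol{A}}(a_1..a_n))$ (a pseudocomplement) and $0=A$ (the minimum); with DT, $\mathrm{Fg}(a_1..a_n)\to\mathrm{Fg}(b_1..b_m)=\mathrm{Fg}((a_1..a_n)\Rightarrow^{\boldsymbol{A}}_{nm}(b_1..b_m))$ (relative pseudocomplement); with PC, $\lor$ as $\cap$ (making it a distributive lattice). Validity of $\Phi$ is with respect to this interpretation. *)

(* Defs.v *)
From mathcomp Require Import all_boot.
From Stdlib Require Import ClassicalEpsilon.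

Set Implicit Arguments.
Unset Strict Implicit.
Unset Printing Implicit Defensive.

Record lang := Lang { op : Type; arity : op -> nat }.

Inductive term (L : lang) : Type :=
| Var : nat -> term L
| App : forall f : op L, ('I_(arity f) -> term L) -> term L.
Arguments Var {L}.
Arguments App {L}.

Fixpoint subst (L : lang) (s : nat -> term L) (t : term L) : term L :=
  match t with
  | Var i => s i
  | App f a => App f (fun j => subst s (a j))
  end.

Fixpoint vars_lt (L : lang) (n : nat) (t : term L) : Prop :=
  match t with
  | Var i => (i < n)%N
  | App f a => forall j, vars_lt n (a j)
  end.

Definition inst (L : lang) (l : seq (term L)) (t : term L) : term L :=
  subst (fun i => nth (Var 0) l i) t.

Definition setl (T : Type) (l : seq T) : T -> Prop := fun x => List.In x l.
Definition union (T : Type) (X Y : T -> Prop) : T -> Prop := fun x => X x \/ Y x.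
Definition inter (T : Type) (X Y : T -> Prop) : T -> Prop := fun x => X x /\ Y x.
Definition emptyset (T : Type) : T -> Prop := fun _ => False.
Definition fullset (T : Type) : T -> Prop := fun _ => True.

Record logic (L : lang) := Logic {
  entails : (term L -> Prop) -> term L -> Prop;
  entails_refl : forall G phi, G phi -> entails G phi;
  entails_mono : forall (G D : term L -> Prop) phi,
      (forall t, G t -> D t) -> entails G phi -> entails D phi;
  entails_cut : forall (G D : term L -> Prop) phi,
      (forall d, D d -> entails G d) -> entails D phi -> entails G phi;
  entails_struct : forall (s : nat -> term L) G phi, entails G phi ->
      entails (fun t => exists u, G u /\ t = subst s u) (subst s phi);
  entails_finitary : forall G phi, entails G phi ->
      exists l : seq (term L), (forall t, List.In t l -> G t) /\ entails (setl l) phi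
}.

Definition entails_all (L : lang) (lg : logic L) (G : term L -> Prop) (l : seq (term L)) :=
  forall t, List.In t l -> entails lg G t.

Definition inconsistent (L : lang) (lg : logic L) (G : term L -> Prop) :=
  forall phi, entails lg G phi.

Definition protoalgebraic (L : lang) (lg : logic L) :=
  exists D : seq (term L),
    D <> [::] /\ (forall d, List.In d D -> vars_lt 2 d) /\
    entails_all lg (@emptyset _) (map (inst [:: Var 0; Var 0]) D) /\
    entails lg (union (setl [:: Var 0]) (setl D)) (Var 1).

Definition is_theorem (L : lang) (lg : logic L) (top : term L) :=
  vars_lt 1 top /\ entails lg (@emptyset _) top.

Definition IL_witness (L : lang) (lg : logic L) (neg : nat -> seq (term L)) :=
  forall n, (0 < n)%N ->
    neg n <> [::] /\ (forall t, List.In t (neg n) -> vars_lt n t) /\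
    forall G phis : seq (term L), size phis = n ->
      (inconsistent lg (union (setl G) (setl phis)) <->
       entails_all lg (setl G) (map (inst phis) (neg n))).

(* imp n m = (x_1..x_n) =>_{nm} (y_1..y_m), with x_i = Var (i-1), y_j = Var (n+j-1) *)
Definition DT_witness (L : lang) (lg : logic L) (imp : nat -> nat -> seq (term L)) :=
  forall n m, (0 < n)%N -> (0 < m)%N ->
    imp n m <> [::] /\ (forall t, List.In t (imp n m) -> vars_lt (n + m) t) /\
    forall G phis psis : seq (term L), size phis = n -> size psis = m ->
      (entails_all lg (union (setl G) (setl phis)) psis <->
       entails_all lg (setl G) (map (inst (phis ++ psis)) (imp n m))).

Definition PC_witness (L : lang) (lg : logic L) (disj : nat -> nat -> seq (term L)) :=
  forall n m, (0 < n)%N -> (0 < m)%N ->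
    disj n m <> [::] /\ (forall t, List.In t (disj n m) -> vars_lt (n + m) t) /\
    forall (G phis psis : seq (term L)) (g : term L), size phis = n -> size psis = m ->
      ((entails lg (union (setl G) (setl phis)) g /\
        entails lg (union (setl G) (setl psis)) g) <->
       entails lg (union (setl G) (setl (map (inst (phis ++ psis)) (disj n m)))) g).

Inductive ipc : Type :=
| IVar of nat
| IAnd of ipc & ipc
| IOr of ipc & ipc
| IImp of ipc & ipc
| INeg of ipc
| IBot
| ITop.

Fixpoint polar (b : bool) (phi : ipc) : Prop :=
  match phi with
  | IVar _ => b = true
  | IAnd a c => polar b a /\ polar b c
  | IOr a c => polar b a /\ polar b c
  | IImp a c => polar (~~ b) a /\ polar b c
  | INeg a => polar (~~ b) a
  | IBot => True
  | ITop => True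
  end.

Definition positive_formula (phi : ipc) := polar true phi.
Definition negative_formula (phi : ipc) := polar false phi.

Inductive sahlqvist_antecedent : ipc -> Prop :=
| SA_var i : sahlqvist_antecedent (IVar i)
| SA_negf phi : negative_formula phi -> sahlqvist_antecedent phi
| SA_bot : sahlqvist_antecedent IBot
| SA_top : sahlqvist_antecedent ITop
| SA_and a c : sahlqvist_antecedent a -> sahlqvist_antecedent c ->
               sahlqvist_antecedent (IAnd a c)
| SA_or a c : sahlqvist_antecedent a -> sahlqvist_antecedent c ->
              sahlqvist_antecedent (IOr a c).

Inductive sahlqvist_implication : ipc -> Prop :=
| SI_pos phi : positive_formula phi -> sahlqvist_implication phi
| SI_neg phi : sahlqvist_antecedent phi -> sahlqvist_implication (INeg phi)
| SI_imp phi psi : sahlqvist_antecedent phi -> positive_formula psi ->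
                   sahlqvist_implication (IImp phi psi).

Inductive sahlqvist_formula : ipc -> Prop :=
| SF_imp phi : sahlqvist_implication phi -> sahlqvist_formula phi
| SF_and a c : sahlqvist_formula a -> sahlqvist_formula c -> sahlqvist_formula (IAnd a c)
| SF_or a c : sahlqvist_formula a -> sahlqvist_formula c -> sahlqvist_formula (IOr a c).

Fixpoint occurs (i : nat) (phi : ipc) : Prop :=
  match phi with
  | IVar j => j = i
  | IAnd a c | IOr a c | IImp a c => occurs i a \/ occurs i c
  | INeg a => occurs i a
  | IBot | ITop => False
  end.

(* The Sahlqvist quasiequation
     phi_1 /\ y <= z & ... & phi_m /\ y <= z  ==>  y <= z
   is represented by the data (phis = [phi_1; ...; phi_m], y, z). *)
Definition sahlqvist_qe (phis : seq ipc) (y z : nat) :=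
  y <> z /\
  forall phi, List.In phi phis ->
    sahlqvist_formula phi /\ ~ occurs y phi /\ ~ occurs z phi.

Fixpoint uses_IL (phi : ipc) : Prop :=
  match phi with
  | IVar _ | ITop => False
  | IBot | INeg _ => True
  | IAnd a c | IOr a c | IImp a c => uses_IL a \/ uses_IL c
  end.

Fixpoint uses_DT (phi : ipc) : Prop :=
  match phi with
  | IVar _ | ITop | IBot => False
  | IImp _ _ => True
  | INeg a => uses_DT a
  | IAnd a c | IOr a c => uses_DT a \/ uses_DT c
  end.

Fixpoint uses_PC (phi : ipc) : Prop :=
  match phi with
  | IVar _ | ITop | IBot => False
  | IOr _ _ => True
  | INeg a => uses_PC a
  | IAnd a c | IImp a c => uses_PC a \/ uses_PC c
  end.

(* compatibility, relative to the fixed witnesses *)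
Definition compatible (L : lang) (lg : logic L) (neg : nat -> seq (term L))
    (imp disj : nat -> nat -> seq (term L)) (phi : ipc) :=
  (uses_IL phi -> IL_witness lg neg) /\
  (uses_DT phi -> DT_witness lg imp) /\
  (uses_PC phi -> PC_witness lg disj).

(* trans k gam phi = phi^k(gam_1^1..gam_1^k, ..., gam_n^1..gam_n^k), where the
   variable x_m^j (j = 1..k) of phi^k is substituted by gam m (j-1); the first
   variable x_1 of phi is IVar 0. *)
Fixpoint trans (L : lang) (top : term L) (neg : nat -> seq (term L))
    (imp disj : nat -> nat -> seq (term L)) (k : nat) (gam : nat -> nat -> term L)
    (phi : ipc) : seq (term L) :=
  match phi with
  | IVar m => mkseq (gam m) k
  | ITop => [:: inst [:: gam 0 0] top]
  | IBot => gam 0 0 :: map (inst [:: gam 0 0]) (neg 1)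
  | IAnd a c => trans top neg imp disj k gam a ++ trans top neg imp disj k gam c
  | INeg a => let l := trans top neg imp disj k gam a in map (inst l) (neg (size l))
  | IImp a c =>
      let l1 := trans top neg imp disj k gam a in
      let l2 := trans top neg imp disj k gam c in
      map (inst (l1 ++ l2)) (imp (size l1) (size l2))
  | IOr a c =>
      let l1 := trans top neg imp disj k gam a in
      let l2 := trans top neg imp disj k gam c in
      map (inst (l1 ++ l2)) (disj (size l1) (size l2))
  end.

Definition validates_metarules (L : lang) (lg : logic L) (top : term L)
    (neg : nat -> seq (term L)) (imp disj : nat -> nat -> seq (term L))
    (phis : seq ipc) :=
  forall k, (0 < k)%N ->
  forall (G : seq (term L)) (psi : term L) (gam : nat -> nat -> term L),
    (forall phi, List.In phi phis ->
       entails lg (union (setl G) (setl (trans top neg imp disj k gam phi))) psi) ->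
    entails lg (setl G) psi.

Record algebra (L : lang) := Alg {
  carrier :> Type;
  ops : forall f : op L, ('I_(arity f) -> carrier) -> carrier
}.

Fixpoint eval (L : lang) (A : algebra L) (v : nat -> A) (t : term L) : A :=
  match t with
  | Var i => v i
  | App f a => @ops L A f (fun j => eval v (a j))
  end.

Definition formula_alg (L : lang) : algebra L := @Alg L (term L) (@App L).

Definition deductive_filter (L : lang) (lg : logic L) (A : algebra L) (F : A -> Prop) :=
  forall G phi, entails lg G phi ->
  forall v : nat -> A, (forall t, G t -> F (eval v t)) -> F (eval v phi).

Definition Fg (L : lang) (lg : logic L) (A : algebra L) (X : A -> Prop) : A -> Prop :=
  fun a => forall F, deductive_filter lg F -> (forall x, X x -> F x) -> F a.

Definition fin_gen (L : lang) (lg : logic L) (A : algebra L) (G : A -> Prop) :=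
  exists l : seq A, G = Fg lg (setl l).

Definition gens (L : lang) (lg : logic L) (A : algebra L) (G : A -> Prop) : seq A :=
  epsilon (inhabits [::]) (fun l : seq A => l <> [::] /\ G = Fg lg (setl l)).

Definition Fg_witness (L : lang) (lg : logic L) (A : algebra L) (l : seq A)
    (W : seq (term L)) : A -> Prop :=
  match l with
  | [::] => Fg lg (@emptyset A)
  | a :: _ => Fg lg (setl (map (eval (fun i => nth a l i)) W))
  end.

Fixpoint interp (L : lang) (lg : logic L) (neg : nat -> seq (term L))
    (imp disj : nat -> nat -> seq (term L)) (A : algebra L) (g : nat -> A -> Prop)
    (phi : ipc) : A -> Prop :=
  match phi with
  | IVar i => g i
  | ITop => Fg lg (@emptyset A)
  | IBot => @fullset A
  | IAnd a c => Fg lg (union (interp lg neg imp disj g a) (interp lg neg imp disj g c))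
  | IOr a c => inter (interp lg neg imp disj g a) (interp lg neg imp disj g c)
  | INeg a =>
      let l := gens lg (interp lg neg imp disj g a) in
      Fg_witness lg l (neg (size l))
  | IImp a c =>
      let l1 := gens lg (interp lg neg imp disj g a) in
      let l2 := gens lg (interp lg neg imp disj g c) in
      Fg_witness lg (l1 ++ l2) (imp (size l1) (size l2))
  end.

(* Fi^omega(A) validates phi_1 /\ y <= z & ... ==> y <= z,
   where a <= b means a /\ b = a *)
Definition validates_qe (L : lang) (lg : logic L) (neg : nat -> seq (term L))
    (imp disj : nat -> nat -> seq (term L)) (A : algebra L)
    (phis : seq ipc) (y z : nat) :=
  forall g : nat -> A -> Prop, (forall i, fin_gen lg (g i)) ->
    (forall phi, List.In phi phis ->
       interp lg neg imp disj g (IAnd (IAnd phi (IVar y)) (IVar z)) =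
       interp lg neg imp disj g (IAnd phi (IVar y))) ->
    interp lg neg imp disj g (IAnd (IVar y) (IVar z)) = interp lg neg imp disj g (IVar y).

(* Main.v *)
Require Import Defs.
From mathcomp Require Import all_boot zify.
From Stdlib Require Import ClassicalEpsilon FunctionalExtensionality PropExtensionality Classical.

Set Implicit Arguments.
Unset Strict Implicit.
Unset Printing Implicit Defensive.

Section Basic.
Context {L : lang}.

Lemma subst_subst (s1 s2 : nat -> term L) t :
  subst s2 (subst s1 t) = subst (fun i => subst s2 (s1 i)) t.
Proof.
elim: t => [n|f a IH] //=; congr App; apply: functional_extensionality => j; exact: IH.
Qed.

Lemma eval_subst (A : algebra L) (v : nat -> A) s t :
  eval v (subst s t) = eval (fun i => eval v (s i)) t.
Proof.
elim: t => [n|f a IH] //=; congr ops; apply: functional_extensionality => j; exact: IH.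
Qed.

Lemma eval_ext_lt (A : algebra L) n (v v' : nat -> A) t :
  vars_lt n t -> (forall i, (i < n)%N -> v i = v' i) -> eval v t = eval v' t.
Proof.
elim: t => [m|f a IH] /= Ht H; first exact: H.
congr ops; apply: functional_extensionality => j; exact: IH.
Qed.

Lemma eval_ext (A : algebra L) (v v' : nat -> A) t :
  (forall i, v i = v' i) -> eval v t = eval v' t.
Proof.
move=> H; elim: t => [m|f a IH] //=.
congr ops; apply: functional_extensionality => j; exact: IH.
Qed.

Lemma eval_fa (s : nat -> term L) t : @eval L (formula_alg L) s t = subst s t.
Proof.
elim: t => [m|f a IH] //=; congr App; apply: functional_extensionality => j; exact: IH.
Qed.

Lemma subst_ext_lt n (s s' : nat -> term L) t :
  vars_lt n t -> (forall i, (i < n)%N -> s i = s' i) -> subst s t = subst s' t.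
Proof.
move=> H1 H2; rewrite -!eval_fa; exact: (@eval_ext_lt (formula_alg L) n).
Qed.

Lemma subst_Var t : subst (@Var L) t = t.
Proof.
elim: t => [m|f a IH] //=; congr App; apply: functional_extensionality => j; exact: IH.
Qed.

Lemma eval_Var t : @eval L (formula_alg L) (@Var L) t = t.
Proof. by rewrite eval_fa subst_Var. Qed.

Definition ren (r : nat -> nat) (t : term L) := subst (fun i => Var (r i)) t.

Lemma eval_ren (A : algebra L) (v : nat -> A) r t : eval v (ren r t) = eval (fun i => v (r i)) t.
Proof. by rewrite /ren eval_subst. Qed.

Definition mrg (A : Type) (ve vo : nat -> A) (i : nat) : A :=
  if odd i then vo i./2 else ve i./2.

Lemma mrg_ev (A : Type) (ve vo : nat -> A) i : mrg ve vo i.*2 = ve i.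
Proof. by rewrite /mrg odd_double doubleK. Qed.

Lemma mrg_od (A : Type) (ve vo : nat -> A) i : mrg ve vo i.*2.+1 = vo i.
Proof. rewrite /mrg /= odd_double /=. by rewrite -[i in RHS](half_bit_double i true). Qed.

Definition dbl (i : nat) := i.*2.
Definition odb (i : nat) := i.*2.+1.

Lemma eval_mrg_ev (A : algebra L) (ve vo : nat -> A) t : eval (mrg ve vo) (ren dbl t) = eval ve t.
Proof. rewrite eval_ren; apply: eval_ext => i; exact: mrg_ev. Qed.
Lemma eval_mrg_od (A : algebra L) (ve vo : nat -> A) t : eval (mrg ve vo) (ren odb t) = eval vo t.
Proof. rewrite eval_ren; apply: eval_ext => i; exact: mrg_od. Qed.

Lemma pext (A : Type) (P Q : A -> Prop) : (forall a, P a <-> Q a) -> P = Q.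
Proof. move=> H; apply: functional_extensionality => a; apply: propositional_extensionality; exact: H. Qed.

Lemma In_nth (T : Type) (d : T) (l : seq T) x :
  List.In x l -> exists k, (k < size l)%N /\ nth d l k = x.
Proof.
elim: l => [|a l IH] //= [->|H]; first by exists 0.
case: (IH H) => k [H1 H2]; by exists k.+1.
Qed.

Lemma nth_In (T : Type) (d : T) (l : seq T) k :
  (k < size l)%N -> List.In (nth d l k) l.
Proof.
elim: l k => [|a l IH] [|k] //= H; first by left.
right; exact: IH.
Qed.

Lemma in_mapP (T U : Type) (f : T -> U) (l : seq T) y :
  List.In y (map f l) -> exists x, f x = y /\ List.In x l.
Proof.
elim: l => [|a l IH] //= [<-|H]; first by exists a; split; [|left].
case: (IH H) => x [H1 H2]; exists x; split => //; by right.
Qed.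


Lemma map_In (T U : Type) (f : T -> U) (l : seq T) x :
  List.In x l -> List.In (f x) (map f l).
Proof. elim: l => [|a l IH] //= [->|H]; [by left|right; exact: IH]. Qed.

End Basic.
Arguments in_mapP {T U f l y}.

Section Filters.
Context {L : lang} (lg : logic L).

Lemma ent_ren (r : nat -> nat) (G : seq (term L)) phi :
  entails lg (setl G) phi -> entails lg (setl (map (ren r) G)) (ren r phi).
Proof.
move=> H; have := entails_struct (fun i => Var (r i)) H.
apply: entails_mono => t [u [Hu ->]]; rewrite /setl; exact: map_In.
Qed.

Lemma ent_subst (s : nat -> term L) (G : seq (term L)) phi :
  entails lg (setl G) phi -> entails lg (setl (map (subst s) G)) (subst s phi).
Proof.
move=> H; have := entails_struct s H.
apply: entails_mono => t [u [Hu ->]]; rewrite /setl; exact: map_In.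
Qed.

Lemma ent_refl (G : term L -> Prop) t : G t -> entails lg G t.
Proof. exact: entails_refl. Qed.

Lemma ent_cut (G D : term L -> Prop) phi :
  (forall d, D d -> entails lg G d) -> entails lg D phi -> entails lg G phi.
Proof. exact: entails_cut. Qed.

Lemma ent_mono (G D : term L -> Prop) phi :
  (forall t, G t -> D t) -> entails lg G phi -> entails lg D phi.
Proof. exact: entails_mono. Qed.

Variable A : algebra L.

Lemma Fg_filter (X : A -> Prop) : deductive_filter lg (Fg lg X).
Proof.
move=> G phi H v HG F HF HX; apply: (HF G phi H v) => t Gt; exact: HG.
Qed.

Lemma Fg_incl (X : A -> Prop) x : X x -> Fg lg X x.
Proof. by move=> Hx F _ HX; apply: HX. Qed.

Lemma Fg_min (X F : A -> Prop) : deductive_filter lg F -> (forall x, X x -> F x) ->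
  forall a, Fg lg X a -> F a.
Proof. by move=> HF HX a Ha; apply: Ha. Qed.

Lemma Fg_mono (X Y : A -> Prop) : (forall x, X x -> Y x) -> forall a, Fg lg X a -> Fg lg Y a.
Proof.
move=> H; apply: Fg_min; first exact: Fg_filter.
move=> x Hx; apply: Fg_incl; exact: H.
Qed.

Lemma filter_ent (F : A -> Prop) (G : term L -> Prop) phi (v : nat -> A) :
  deductive_filter lg F -> entails lg G phi -> (forall t, G t -> F (eval v t)) -> F (eval v phi).
Proof. move=> HF H1 H2; exact: (HF G phi H1 v H2). Qed.

Lemma Fg_thm (X : A -> Prop) t (v : nat -> A) :
  entails lg (@emptyset _) t -> Fg lg X (eval v t).
Proof. move=> H; apply: (@filter_ent (Fg lg X) _ t v (@Fg_filter X) H) => u []. Qed.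

Lemma Fg_idem (X : A -> Prop) a : Fg lg (Fg lg X) a -> Fg lg X a.
Proof. apply: Fg_min; [exact: Fg_filter| by []]. Qed.

Lemma Fg0_sub (X : A -> Prop) a : Fg lg (@emptyset A) a -> Fg lg X a.
Proof. apply: Fg_mono => x []. Qed.

End Filters.

Lemma in_app (T : Type) (l m : seq T) x : List.In x (l ++ m) -> List.In x l \/ List.In x m.
Proof. exact: List.in_app_or. Qed.

Arguments in_app {T l m x}.

Lemma In_iota m n k : List.In k (iota m n) -> (m <= k < m + n)%N.
Proof.
elim: n m => [|n IH] m //= [->|H]; first by lia.
have := IH _ H; lia.
Qed.

Lemma iota_In m n k : (m <= k < m + n)%N -> List.In k (iota m n).
Proof.
elim: n m => [|n IH] m /= H; first by lia.
case: (eqVneq k m) => [->|ne]; [by left|right; apply: IH; lia].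
Qed.

Section Proto.
Context {L : lang} (lg : logic L) (Dl : seq (term L))
  (HD1 : forall d, List.In d Dl -> vars_lt 2 d)
  (HD2 : entails_all lg (@emptyset _) (map (inst [:: Var 0; Var 0]) Dl))
  (HD3 : entails lg (union (setl [:: Var 0]) (setl Dl)) (Var 1)).

Lemma proto_mp (G : term L -> Prop) a b :
  entails lg G a -> (forall d, List.In d Dl -> entails lg G (inst [:: a; b] d)) ->
  entails lg G b.
Proof.
move=> Ha Hd; have := entails_struct (fun i => nth (Var 0) [:: a; b] i) HD3.
apply: ent_cut => t [u [[Hu|Hu] ->]].
- by case: Hu => // <-.
- exact: Hd.
Qed.

Lemma proto_thm (A : algebra L) (V : nat -> A) a b d :
  List.In d Dl -> eval V a = eval V b -> Fg lg (@emptyset A) (eval V (inst [:: a; b] d)).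
Proof.
move=> Hd Hab.
have -> : eval V (inst [:: a; b] d) = eval (fun _ => eval V a) (inst [:: Var 0; Var 0] d).
  rewrite /inst !eval_subst; apply: (eval_ext_lt (HD1 Hd)) => i.
  by case: i => [|[|i]] //=.
apply: Fg_thm; apply: HD2; exact: map_In.
Qed.

Variable A : algebra L.

Definition prem (X : A -> Prop) (v : nat -> A) (G : seq (term L)) :=
  forall g, List.In g G -> X (eval v g) \/ Fg lg (@emptyset A) (eval v g).

Definition Der (X : A -> Prop) (c : A) :=
  exists (G : seq (term L)) phi (v : nat -> A),
    entails lg (setl G) phi /\ prem X v G /\ eval v phi = c.

Lemma prem_ren (X : A -> Prop) ve vo G :
  prem X ve G -> prem X (mrg ve vo) (map (ren dbl) G).
Proof.
move=> H g Hg; case: (in_mapP Hg) => u [<- Hu]; rewrite eval_mrg_ev; exact: H.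
Qed.

Lemma prem_reno (X : A -> Prop) ve vo G :
  prem X vo G -> prem X (mrg ve vo) (map (ren odb) G).
Proof.
move=> H g Hg; case: (in_mapP Hg) => u [<- Hu]; rewrite eval_mrg_od; exact: H.
Qed.

Lemma multi (a0 : A) n (X : nat -> A -> Prop) (c : nat -> A) :
  (forall k, (k < n)%N -> Der (X k) (c k)) ->
  exists (v : nat -> A) (D : nat -> seq (term L) * term L),
    forall k, (k < n)%N ->
      entails lg (setl (D k).1) (D k).2 /\ prem (X k) v (D k).1 /\ eval v (D k).2 = c k.
Proof.
elim: n => [|n IH] H.
  by exists (fun _ => a0), (fun _ => ([::], Var 0)).
case: IH => [k Hk|v [D HD]]; first by apply: H; lia.
case: (H n (leqnn _)) => G [phi [v' [H1 [H2 H3]]]].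
exists (mrg v v'), (fun k => if (k < n)%N then (map (ren dbl) (D k).1, ren dbl (D k).2)
                          else (map (ren odb) G, ren odb phi)).
move=> k Hk; case: ifP => Hkn /=.
- case: (HD k Hkn) => E1 [E2 E3]; split; [exact: ent_ren|split; [exact: prem_ren|]].
  by rewrite eval_mrg_ev.
- have -> : k = n by lia.
  split; [exact: ent_ren|split; [exact: prem_reno|]]. by rewrite eval_mrg_od.
Qed.

Lemma Der_filter (X : A -> Prop) : deductive_filter lg (Der X).
Proof.
move=> G psi Hent w Hw.
case: (entails_finitary Hent) => Gl [HGl Hent'].
set n := size Gl.
have := @multi (w 0) n (fun _ => X) (fun k => eval w (nth (Var 0) Gl k)).
case=> [k Hk|v [D HD]].
  apply: Hw; apply: HGl; exact: nth_In.
set Gam := List.flat_map (fun k => map (ren odb) (D k).1 ++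
      map (inst [:: ren odb (D k).2; ren dbl (nth (Var 0) Gl k)]) Dl) (iota 0 n).
exists Gam, (ren dbl psi), (mrg w v); split; [|split].
- apply: (ent_cut (D := setl (map (ren dbl) Gl))); last exact: ent_ren.
  move=> d Hd0; case: (in_mapP Hd0) => u [<- Hu].
  case: (In_nth (Var 0) Hu) => k [Hk <-].
  have Hin : forall t, List.In t (map (ren odb) (D k).1 ++
      map (inst [:: ren odb (D k).2; ren dbl (nth (Var 0) Gl k)]) Dl) -> setl Gam t.
    move=> t Ht; rewrite /setl /Gam; apply/List.in_flat_map; exists k; split => //.
    apply: iota_In; lia.
  apply: (proto_mp (a := ren odb (D k).2)).
  + case: (HD k Hk) => E1 _.
    apply: ent_mono (ent_ren odb E1) => t Ht; apply: Hin; apply: List.in_or_app; by left.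
  + move=> d0 Hd; apply: ent_refl; apply: Hin; apply: List.in_or_app; right.
    exact: map_In.
- move=> g /List.in_flat_map [k [Hk Hg]].
  have Hk' : (k < n)%N by have := In_iota Hk; lia.
  case: (List.in_app_or _ _ _ Hg) => Hg'.
  + case: (HD k Hk') => _ [E2 _]; have := prem_reno w E2; apply; exact: Hg'.
  + case/in_mapP: Hg' => d [<- Hd]; right; apply: proto_thm => //.
    rewrite eval_mrg_od eval_mrg_ev; by case: (HD k Hk') => _ [_ ->].
- by rewrite eval_mrg_ev.
Qed.

Lemma key (X : A -> Prop) c : Fg lg X c <-> Der X c.
Proof.
split.
- apply: Fg_min; first exact: Der_filter.
  move=> x Hx; exists [:: Var 0], (Var 0), (fun _ => x); split; [|split] => //.
  + apply: ent_refl; by left.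
  + move=> g [<-|[]]; by left.
- case=> G [phi [v [H1 [H2 <-]]]].
  apply: (filter_ent (@Fg_filter _ lg A X) H1) => t Ht.
  case: (H2 t Ht) => H; [exact: Fg_incl|exact: Fg0_sub].
Qed.


Lemma build (h0 v : nat -> A) (P : seq (term L)) (G : seq (term L)) :
  prem (setl (map (eval h0) P)) v G ->
  exists Pi0 : seq (term L),
    (forall p, List.In p Pi0 -> Fg lg (@emptyset A) (eval (mrg h0 v) p)) /\
    (forall g, List.In g G -> entails lg (setl (Pi0 ++ map (ren dbl) P)) (ren odb g)).
Proof.
elim: G => [|g G IH] H.
  by exists [::]; split.
case: IH => [g' Hg'|Pi0 [H1 H2]]; first by apply: H; right.
have Hmono : forall Q t, entails lg (setl (Pi0 ++ map (ren dbl) P)) t ->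
    entails lg (setl ((Q ++ Pi0) ++ map (ren dbl) P)) t.
  move=> Q t; apply: ent_mono => u; rewrite /setl -catA => Hu.
  apply: List.in_or_app; by right.
case: (H g (or_introl erefl)) => Hg.
- case/in_mapP: Hg => p [Hp HpP].
  exists (map (inst [:: ren dbl p; ren odb g]) Dl ++ Pi0); split.
  + move=> q /in_app [Hq0|Hq]; last exact: H1. case: (in_mapP Hq0) => d [<- Hd].
    apply: proto_thm => //; by rewrite eval_mrg_ev eval_mrg_od.
  + move=> g' [<-|Hg']; last exact: Hmono (H2 _ Hg').
    apply: (proto_mp (a := ren dbl p)).
    * apply: ent_refl; rewrite /setl; apply: List.in_or_app; right; exact: map_In.
    * move=> d Hd; apply: ent_refl; rewrite /setl -catA; apply: List.in_or_app; left.
      exact: map_In.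
- exists (ren odb g :: Pi0); split.
  + move=> q [<-|Hq]; [by rewrite eval_mrg_od|exact: H1].
  + move=> g' [<-|Hg']; last exact: (Hmono [:: ren odb g] _ (H2 _ Hg')).
    apply: ent_refl; by left.
Qed.

Lemma norm (a0 : A) n (h0 : nat -> A) (P : nat -> seq (term L)) (t : nat -> term L) :
  (forall k, (k < n)%N -> Fg lg (setl (map (eval h0) (P k))) (eval h0 (t k))) ->
  exists (V : nat -> A) (Pi : nat -> seq (term L)),
    (forall i, V i.*2 = h0 i) /\
    (forall k p, (k < n)%N -> List.In p (Pi k) -> Fg lg (@emptyset A) (eval V p)) /\
    (forall k, (k < n)%N ->
        entails lg (setl (Pi k ++ map (ren dbl) (P k))) (ren dbl (t k))).
Proof.
move=> H.
have := @multi a0 n (fun k => setl (map (eval h0) (P k))) (fun k => eval h0 (t k)).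
case=> [k Hk|v [D HD]]; first by apply/key; apply: H.
have Hex : forall k, exists Pi0 : seq (term L), (k < n)%N ->
    (forall p, List.In p Pi0 -> Fg lg (@emptyset A) (eval (mrg h0 v) p)) /\
    entails lg (setl (Pi0 ++ map (ren dbl) (P k))) (ren dbl (t k)).
  move=> k; case: (ltnP k n) => Hk; last by exists [::] => Hk'; exfalso; lia.
  case: (HD k Hk) => E1 [E2 E3].
  case: (build E2) => Pi0 [B1 B2].
  exists (Pi0 ++ map (inst [:: ren odb (D k).2; ren dbl (t k)]) Dl) => _; split.
  - move=> p /in_app [Hp|Hp0]; first exact: B1. case: (in_mapP Hp0) => d [<- Hd].
    apply: proto_thm => //; by rewrite eval_mrg_ev eval_mrg_od.
  - apply: (proto_mp (a := ren odb (D k).2)).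
    + apply: (ent_cut _ (ent_ren odb E1)) => g Hg1; case: (in_mapP Hg1) => g0 [<- Hg0].
      apply: ent_mono (B2 _ Hg0) => u; rewrite /setl => /in_app [Hu|Hu];
        apply: List.in_or_app; [left; apply: List.in_or_app; by left|by right].
    + move=> d Hd; apply: ent_refl; rewrite /setl; apply: List.in_or_app; left.
      apply: List.in_or_app; right; exact: map_In.
exists (mrg h0 v), (fun k => proj1_sig (constructive_indefinite_description _ (Hex k))).
split; first by move=> i; rewrite mrg_ev.
split.
- move=> k p Hk; case: (constructive_indefinite_description _ (Hex k)) => Pi0 /= HP.
  by case: (HP Hk) => B1 _; apply: B1.
- move=> k Hk; case: (constructive_indefinite_description _ (Hex k)) => Pi0 /= HP.
  by case: (HP Hk).
Qed.

End Proto.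

Section Transfer.
Context {L : lang} (lg : logic L) (Dl : seq (term L))
  (HD1 : forall d, List.In d Dl -> vars_lt 2 d)
  (HD2 : entails_all lg (@emptyset _) (map (inst [:: Var 0; Var 0]) Dl))
  (HD3 : entails lg (union (setl [:: Var 0]) (setl Dl)) (Var 1)).
Variable A : algebra L.

Definition vs m n : seq (term L) := map (@Var L) (iota m n).

Lemma In_vs m n t : List.In t (vs m n) -> exists i, (m <= i < m + n)%N /\ t = Var i.
Proof. move=> H; case: (in_mapP H) => i [<- Hi]; exists i; split => //; exact: In_iota. Qed.

Lemma vs_In m n i : (m <= i < m + n)%N -> List.In (Var i) (vs m n).
Proof. move=> H; apply: map_In; exact: iota_In. Qed.

Lemma size_vs m n : size (vs m n) = n.
Proof. by rewrite /vs size_map size_iota. Qed.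

Lemma nth_vs m n i : (i < n)%N -> nth (Var 0) (vs m n) i = Var (m + i).
Proof. move=> H; by rewrite /vs (nth_map 0) ?size_iota // nth_iota. Qed.

Lemma eval_inst (V : nat -> A) ts d :
  eval V (inst ts d) = eval (fun i => eval V (nth (Var 0) ts i)) d.
Proof. exact: eval_subst. Qed.

Lemma inst_ren n d (ts : seq (term L)) (r : nat -> nat) :
  vars_lt n d -> size ts = n -> (forall i, (i < n)%N -> nth (Var 0) ts i = Var (r i)) ->
  inst ts d = ren r d.
Proof. move=> Hd Hs H; apply: (subst_ext_lt Hd) => i Hi; exact: H. Qed.

Lemma nth_catl (a0 : A) (l S : seq A) i : (i < size l)%N -> nth a0 (l ++ S) i = nth a0 l i.
Proof. move=> H; by rewrite nth_cat H. Qed.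

Lemma nth_catr (a0 : A) (l S : seq A) j : nth a0 (l ++ S) (size l + j) = nth a0 S j.
Proof. by rewrite nth_cat ltnNge leq_addr /= addKn. Qed.

Lemma setl_nth (a0 : A) (l : seq A) x : List.In x l -> exists i, (i < size l)%N /\ x = nth a0 l i.
Proof. move=> H; case: (In_nth a0 H) => i [H1 H2]; by exists i. Qed.

Lemma Fg_ext (X Y : A -> Prop) : (forall a, Fg lg X a <-> Fg lg Y a) -> Fg lg X = Fg lg Y.
Proof. exact: pext. Qed.

Section IL.
Variable neg : nat -> seq (term L).
Hypothesis HIL : IL_witness lg neg.

Lemma IL_inc (phis : seq (term L)) : (0 < size phis)%N ->
  inconsistent lg (union (setl (map (inst phis) (neg (size phis)))) (setl phis)).
Proof.
move=> Hn; case: (HIL Hn) => _ [_ H]; apply/(H _ phis erefl) => t Ht; exact: ent_refl.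
Qed.

Lemma IL_full (a0 : A) (l : seq A) : (0 < size l)%N ->
  forall e, Fg lg (union (setl (map (eval (nth a0 l)) (neg (size l)))) (setl l)) e.
Proof.
move=> Hn e; set n := size l.
have Hi := IL_inc (phis := vs 0 n); rewrite size_vs in Hi; have := Hi Hn (Var n).
set V := fun i => if (i < n)%N then nth a0 l i else e.
move=> H; have := filter_ent (v := V) (@Fg_filter _ lg A _) H; rewrite /= /V ltnn; apply.
move=> t [Ht|Ht].
- case: (in_mapP Ht) => d [<- Hd]; apply: Fg_incl; left.
  have -> : eval V (inst (vs 0 n) d) = eval (nth a0 l) d.
    rewrite eval_inst; apply: (eval_ext_lt (n := n)).
      by case: (HIL Hn) => _ [H2 _]; apply: H2.
    by move=> i Hi'; rewrite nth_vs //= /V add0n Hi'.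
  exact: map_In.
- case: (In_vs Ht) => i [Hvi ->]; apply: Fg_incl; right; rewrite /= /V.
  have Hvi' : (i < n)%N by lia.
  rewrite Hvi'; exact: nth_In.
Qed.

Lemma IL_tr (a0 : A) (S l : seq A) : (0 < size l)%N ->
  (forall e, Fg lg (union (setl S) (setl l)) e) ->
  forall d, List.In d (neg (size l)) -> Fg lg (setl S) (eval (nth a0 l) d).
Proof.
move=> Hn Hfull; set n := size l; set s := size S; set N := size (neg n).
set h0 := nth a0 (l ++ S).
have Hhyp : forall k, (k < N)%N ->
    Fg lg (setl (map (eval h0) (vs 0 (n + s)))) (eval h0 (nth (Var 0) (neg n) k)).
  move=> k _; apply: (Fg_mono (X := union (setl S) (setl l))) (Hfull _) => x [HS|Hl].
  - case: (setl_nth a0 HS) => j [Hj ->].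
    rewrite -(nth_catr a0 l S j) -/h0.
    have -> : h0 (n + j) = eval h0 (Var (n + j)) by [].
    apply: map_In; apply: vs_In; lia.
  - case: (setl_nth a0 Hl) => i [Hi ->].
    rewrite -(nth_catl a0 S Hi) -/h0.
    have -> : h0 i = eval h0 (Var i) by [].
    apply: map_In; apply: vs_In; lia.
have [V [Pi [HV [HPi Hent]]]] := norm HD1 HD2 HD3 a0 Hhyp.
set G := List.flat_map Pi (iota 0 N) ++ map (ren dbl) (vs n s).
set phis := map (ren dbl) (vs 0 n).
have Hsz : size phis = n by rewrite size_map size_vs.
have Hnth : forall i, (i < n)%N -> nth (Var 0) phis i = Var (dbl i).
  by move=> i Hi; rewrite (nth_map (Var 0)) ?size_vs // nth_vs.
have Hvl : forall d, List.In d (neg n) -> vars_lt n d.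
  by case: (HIL Hn) => _ [H2 _].
have C1 : forall d, List.In d (neg n) -> entails lg (union (setl G) (setl phis)) (inst phis d).
  move=> d Hd; case: (In_nth (Var 0) Hd) => k [Hk Hkd].
  rewrite (inst_ren (Hvl _ Hd) Hsz Hnth) -Hkd.
  apply: ent_mono (Hent k Hk) => u /in_app [Hu|Hu].
  + left; apply: List.in_or_app; left; apply/List.in_flat_map; exists k; split => //.
    apply: iota_In; lia.
  + case: (in_mapP Hu) => w [<- Hw]; case: (In_vs Hw) => i [Hi ->].
    case: (ltnP i n) => Hin.
    * right; apply: map_In; apply: vs_In; lia.
    * left; apply: List.in_or_app; right; apply: map_In; apply: vs_In; lia.
have C2 : inconsistent lg (union (setl G) (setl phis)).
  move=> phi; apply: (ent_cut (D := union (setl (map (inst phis) (neg n))) (setl phis))).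
  + move=> u [Hu|Hu]; last by apply: ent_refl; right.
    case: (in_mapP Hu) => d [<- Hd]; exact: C1.
  + have := IL_inc (phis := phis); rewrite Hsz; apply; lia.
case: (HIL Hn) => _ [_ H3].
have C3 := proj1 (H3 G phis Hsz) C2.
move=> d Hd.
have E := filter_ent (v := V) (@Fg_filter _ lg A (setl S)) (C3 _ (map_In (inst phis) Hd)).
have <- : eval V (inst phis d) = eval (nth a0 l) d.
  rewrite (inst_ren (Hvl _ Hd) Hsz Hnth) eval_ren.
  apply: (eval_ext_lt (Hvl _ Hd)) => i Hi; rewrite HV /h0 nth_catl //.
apply: E => u /in_app [Hu|Hu].
- case/List.in_flat_map: Hu => k [Hk Hu]; apply: Fg0_sub; apply: (HPi k) => //.
  have := In_iota Hk; lia.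
- case: (in_mapP Hu) => w [<- Hw]; case: (In_vs Hw) => i [Hi ->].
  rewrite /= HV /h0 nth_cat.
  have -> : (i < size l)%N = false by rewrite -/n; lia.
  apply: Fg_incl; apply: nth_In; rewrite -/n; lia.
Qed.

Lemma IL_sub (a1 a2 : A) (l1 l2 : seq A) : (0 < size l1)%N -> (0 < size l2)%N ->
  Fg lg (setl l1) = Fg lg (setl l2) ->
  forall x, Fg lg (setl (map (eval (nth a2 l2)) (neg (size l2)))) x ->
            Fg lg (setl (map (eval (nth a1 l1)) (neg (size l1)))) x.
Proof.
move=> H1 H2 E; apply: Fg_min; first exact: Fg_filter.
move=> x Hx; case: (in_mapP Hx) => d [<- Hd].
apply: IL_tr => // e.
have := @IL_full a1 l1 H1 e; apply: Fg_min; first exact: Fg_filter.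
move=> u [Hu|Hu]; first by apply: Fg_incl; left.
have : Fg lg (setl l2) u by rewrite -E; exact: Fg_incl.
apply: Fg_mono => w Hw; by right.
Qed.

Lemma IL_wd (a1 a2 : A) (l1 l2 : seq A) : (0 < size l1)%N -> (0 < size l2)%N ->
  Fg lg (setl l1) = Fg lg (setl l2) ->
  Fg lg (setl (map (eval (nth a1 l1)) (neg (size l1)))) =
  Fg lg (setl (map (eval (nth a2 l2)) (neg (size l2)))).
Proof.
move=> H1 H2 E; apply: Fg_ext => x; split; apply: IL_sub => //.
Qed.

End IL.

Lemma vs_cat m n k : vs m n ++ vs (m + n) k = vs m (n + k).
Proof. by rewrite /vs iotaD map_cat. Qed.

Lemma inst_vs0 n d : vars_lt n d -> inst (vs 0 n) d = d.
Proof.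
move=> Hd; rewrite (inst_ren (r := id) Hd (size_vs 0 n)) ?/ren ?subst_Var //.
move=> i Hi; by rewrite nth_vs.
Qed.

Lemma Fg_union_congr (X Y Y' : A -> Prop) : Fg lg Y = Fg lg Y' ->
  forall x, Fg lg (union X Y) x -> Fg lg (union X Y') x.
Proof.
move=> E; apply: Fg_min; first exact: Fg_filter.
move=> x [Hx|Hx]; first by apply: Fg_incl; left.
have : Fg lg Y' x by rewrite -E; exact: Fg_incl.
apply: Fg_mono => w Hw; by right.
Qed.

Lemma dbl_nth m n i : (i < n)%N -> nth (Var 0) (map (ren dbl) (vs m n)) i = Var (dbl (m + i)).
Proof. by move=> Hi; rewrite (nth_map (Var 0)) ?size_vs // nth_vs. Qed.

Lemma eval_dbl (V h0 : nat -> A) t : (forall i, V i.*2 = h0 i) -> eval V (ren dbl t) = eval h0 t.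
Proof. move=> HV; rewrite eval_ren; apply: eval_ext => i; exact: HV. Qed.

Section DT.
Variable imp : nat -> nat -> seq (term L).
Hypothesis HDT : DT_witness lg imp.

Lemma DT_back (a0 : A) (S l1 l2 : seq A) : (0 < size l1)%N -> (0 < size l2)%N ->
  (forall d, List.In d (imp (size l1) (size l2)) ->
     Fg lg (setl S) (eval (nth a0 (l1 ++ l2)) d)) ->
  forall b, List.In b l2 -> Fg lg (union (setl S) (setl l1)) b.
Proof.
move=> Hn Hm H b Hb; set n := size l1; set m := size l2.
case: (HDT Hn Hm) => _ [Hvl H3].
set Gd := map (inst (vs 0 n ++ vs n m)) (imp n m).
have := proj2 (H3 Gd (vs 0 n) (vs n m) (size_vs _ _) (size_vs _ _)) (fun t Ht => ent_refl lg Ht).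
case: (setl_nth a0 Hb) => j [Hj ->] Hall.
have Hy : List.In (Var (n + j)) (vs n m) by apply: vs_In; lia.
have := filter_ent (v := nth a0 (l1 ++ l2)) (@Fg_filter _ lg A (union (setl S) (setl l1))) (Hall _ Hy).
rewrite /= nth_catr; apply => u [Hu|Hu].
- case: (in_mapP Hu) => d [<- Hd].
  rewrite (_ : vs 0 n ++ vs n m = vs 0 (n + m)) ?vs_cat // inst_vs0; last exact: Hvl.
  apply: Fg_mono (H d Hd) => x Hx; by left.
- case: (In_vs Hu) => i [Hi ->]; apply: Fg_incl; right; rewrite /= nth_catl; last lia.
  apply: nth_In; rewrite -/n; lia.
Qed.

Lemma DT_fwd (a0 : A) (S l1 l2 : seq A) : (0 < size l1)%N -> (0 < size l2)%N ->
  (forall b, List.In b l2 -> Fg lg (union (setl S) (setl l1)) b) ->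
  forall d, List.In d (imp (size l1) (size l2)) ->
     Fg lg (setl S) (eval (nth a0 (l1 ++ l2)) d).
Proof.
move=> Hn Hm H; set n := size l1; set m := size l2; set s := size S.
set h0 := nth a0 (l1 ++ l2 ++ S).
have Hhyp : forall k, (k < m)%N ->
    Fg lg (setl (map (eval h0) (vs 0 n ++ vs (n + m) s))) (eval h0 (Var (n + k))).
  move=> k Hk.
  have -> : eval h0 (Var (n + k)) = nth a0 l2 k by rewrite /= /h0 nth_catr nth_catl.
  apply: (Fg_mono (X := union (setl S) (setl l1))) (H _ (nth_In _ Hk)) => x [HS|Hl].
  - case: (setl_nth a0 HS) => j [Hj ->].
    have -> : nth a0 S j = eval h0 (Var (n + m + j)).
      rewrite /= /h0 catA; have := nth_catr a0 (l1 ++ l2) S j; rewrite size_cat. done.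
    apply: map_In; apply: List.in_or_app; right; apply: vs_In; lia.
  - case: (setl_nth a0 Hl) => i [Hi ->].
    have -> : nth a0 l1 i = eval h0 (Var i) by rewrite /= /h0 nth_catl.
    apply: map_In; apply: List.in_or_app; left; apply: vs_In; lia.
have [V [Pi [HV [HPi Hent]]]] := norm HD1 HD2 HD3 a0 Hhyp.
set G := List.flat_map Pi (iota 0 m) ++ map (ren dbl) (vs (n + m) s).
set phis := map (ren dbl) (vs 0 n).
set psis := map (ren dbl) (vs n m).
have Hsp : size phis = n by rewrite size_map size_vs.
have Hss : size psis = m by rewrite size_map size_vs.
case: (HDT Hn Hm) => _ [Hvl H3].
have C1 : entails_all lg (union (setl G) (setl phis)) psis.
  move=> p Hp; case: (in_mapP Hp) => w [<- Hw]; case: (In_vs Hw) => i [Hi ->].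
  have Hni : (n <= i)%N by lia.
  have -> : Var i = Var (n + (i - n)) by rewrite subnKC.
  apply: ent_mono (Hent (i - n) ltac:(lia)) => u /in_app [Hu|Hu].
  + left; apply: List.in_or_app; left; apply/List.in_flat_map; exists (i - n); split => //.
    apply: iota_In; lia.
  + case: (in_mapP Hu) => w' [<- Hw'].
    case/in_app: Hw' => Hw'; [right|left; apply: List.in_or_app; right]; exact: map_In.
have C2 := proj1 (H3 G phis psis Hsp Hss) C1.
move=> d Hd.
have E := filter_ent (v := V) (@Fg_filter _ lg A (setl S))
  (C2 _ (map_In (inst (phis ++ psis)) Hd)).
have <- : eval V (inst (phis ++ psis) d) = eval (nth a0 (l1 ++ l2)) d.
  have Hpp : phis ++ psis = map (ren dbl) (vs 0 (n + m)) by rewrite -map_cat vs_cat.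
  rewrite Hpp (inst_ren (n := n + m) (r := dbl) (Hvl _ Hd)) ?size_map ?size_vs ?size_iota //;
    last by move=> i Hi; rewrite dbl_nth.
  rewrite (eval_dbl _ HV); apply: (eval_ext_lt (Hvl _ Hd)) => i Hi.
  by rewrite /h0 catA nth_catl // size_cat.
apply: E => u /in_app [Hu|Hu].
- case/List.in_flat_map: Hu => k [Hk Hu]; apply: Fg0_sub; apply: (HPi k) => //.
  have := In_iota Hk; lia.
- case: (in_mapP Hu) => w [<- Hw]; case: (In_vs Hw) => i [Hi ->].
  rewrite /= HV /h0 catA nth_cat size_cat.
  have -> : (i < n + m)%N = false by lia.
  apply: Fg_incl; apply: nth_In; lia.
Qed.

Lemma DT_sub (a1 a2 : A) (l1 l2 l1' l2' : seq A) :
  (0 < size l1)%N -> (0 < size l2)%N -> (0 < size l1')%N -> (0 < size l2')%N ->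
  Fg lg (setl l1) = Fg lg (setl l1') -> Fg lg (setl l2) = Fg lg (setl l2') ->
  forall x, Fg lg (setl (map (eval (nth a2 (l1' ++ l2'))) (imp (size l1') (size l2')))) x ->
            Fg lg (setl (map (eval (nth a1 (l1 ++ l2))) (imp (size l1) (size l2)))) x.
Proof.
move=> H1 H2 H1' H2' E1 E2; set I := map _ (imp (size l1) (size l2)).
apply: Fg_min; first exact: Fg_filter.
move=> x Hx; case: (in_mapP Hx) => d [<- Hd].
apply: DT_fwd => // b Hb.
apply: (Fg_union_congr E1).
have HB := @DT_back a1 I l1 l2 H1 H2 (fun d Hd => Fg_incl (map_In _ Hd)).
have : Fg lg (setl l2) b by rewrite E2; exact: Fg_incl.
apply: Fg_min; first exact: Fg_filter.
exact: HB.
Qed.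

End DT.

Section PC.
Variable disj : nat -> nat -> seq (term L).
Hypothesis HPC : PC_witness lg disj.

Lemma PC_in (a0 : A) (l1 l2 : seq A) : (0 < size l1)%N -> (0 < size l2)%N ->
  forall x, Fg lg (setl (map (eval (nth a0 (l1 ++ l2))) (disj (size l1) (size l2)))) x ->
    Fg lg (setl l1) x /\ Fg lg (setl l2) x.
Proof.
move=> Hn Hm x Hx; set n := size l1; set m := size l2.
case: (HPC Hn Hm) => _ [Hvl H3].
have Hrefl : forall d, List.In d (disj n m) ->
    entails lg (union (setl [::]) (setl (vs 0 n))) (inst (vs 0 n ++ vs n m) d) /\
    entails lg (union (setl [::]) (setl (vs n m))) (inst (vs 0 n ++ vs n m) d).
  move=> d Hd; apply/(H3 [::] (vs 0 n) (vs n m) _ (size_vs _ _) (size_vs _ _)).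
  apply: ent_refl; right; exact: map_In.
split; apply: (Fg_min (@Fg_filter _ lg A _)) Hx => u Hu; case: (in_mapP Hu) => d [<- Hd];
  case: (Hrefl d Hd) => E1 E2;
  rewrite (_ : vs 0 n ++ vs n m = vs 0 (n + m)) ?vs_cat // inst_vs0 in E1 E2; try exact: Hvl.
- apply: (filter_ent (@Fg_filter _ lg A _) E1) => t [[]|Ht].
  case: (In_vs Ht) => i [Hi ->]; apply: Fg_incl; rewrite /= nth_catl; last lia.
  apply: nth_In; rewrite -/n; lia.
- apply: (filter_ent (@Fg_filter _ lg A _) E2) => t [[]|Ht].
  case: (In_vs Ht) => i [Hi ->]; apply: Fg_incl; rewrite /= nth_cat.
  have -> : (i < size l1)%N = false by rewrite -/n; lia.
  apply: nth_In; rewrite -/m; lia.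
Qed.

Lemma PC_out (a0 : A) (l1 l2 : seq A) : (0 < size l1)%N -> (0 < size l2)%N ->
  forall c, Fg lg (setl l1) c -> Fg lg (setl l2) c ->
    Fg lg (setl (map (eval (nth a0 (l1 ++ l2))) (disj (size l1) (size l2)))) c.
Proof.
move=> Hn Hm c Hc1 Hc2; set n := size l1; set m := size l2.
set h0 := nth a0 (l1 ++ l2 ++ [:: c]).
have Hc : eval h0 (Var (n + m)) = c.
  by rewrite /= /h0 catA; have := nth_catr a0 (l1 ++ l2) [:: c] 0; rewrite size_cat addn0.
have Hh1 : forall i, (i < n)%N -> h0 i = nth a0 l1 i by move=> i Hi; rewrite /h0 nth_catl.
have Hh2 : forall j, (j < m)%N -> h0 (n + j) = nth a0 l2 j.
  by move=> j Hj; rewrite /h0 nth_catr nth_catl.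
have Hhyp : forall k, (k < 2)%N ->
    Fg lg (setl (map (eval h0) (if k == 0 then vs 0 n else vs n m))) (eval h0 (Var (n + m))).
  move=> k Hk; rewrite Hc; case: (k == 0).
  - apply: Fg_mono Hc1 => x Hx; case: (setl_nth a0 Hx) => i [Hi ->].
    rewrite -Hh1 //; apply: (map_In (eval h0) (x := Var i)); apply: vs_In; lia.
  - apply: Fg_mono Hc2 => x Hx; case: (setl_nth a0 Hx) => j [Hj ->].
    rewrite -Hh2 //; apply: (map_In (eval h0) (x := Var (n + j))); apply: vs_In; lia.
have [V [Pi [HV [HPi Hent]]]] := norm HD1 HD2 HD3 a0 Hhyp.
set G := Pi 0 ++ Pi 1.
set phis := map (ren dbl) (vs 0 n).
set psis := map (ren dbl) (vs n m).
have Hsp : size phis = n by rewrite size_map size_vs.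
have Hss : size psis = m by rewrite size_map size_vs.
case: (HPC Hn Hm) => _ [Hvl H3].
have E1 : entails lg (union (setl G) (setl phis)) (ren dbl (Var (n + m))).
  apply: ent_mono (Hent 0 erefl) => u /in_app [Hu|Hu]; [left; apply: List.in_or_app; by left|by right].
have E2 : entails lg (union (setl G) (setl psis)) (ren dbl (Var (n + m))).
  apply: ent_mono (Hent 1 erefl) => u /in_app [Hu|Hu]; [left; apply: List.in_or_app; by right|by right].
have E := proj1 (H3 G phis psis _ Hsp Hss) (conj E1 E2).
rewrite -Hc -(eval_dbl _ HV).
apply: (filter_ent (@Fg_filter _ lg A _) E) => u [Hu|Hu].
- apply: Fg0_sub; case/in_app: Hu => Hu; [exact: (HPi 0)|exact: (HPi 1)].
- case: (in_mapP Hu) => d [<- Hd]; apply: Fg_incl.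
  have -> : eval V (inst (phis ++ psis) d) = eval (nth a0 (l1 ++ l2)) d.
    have Hpp : phis ++ psis = map (ren dbl) (vs 0 (n + m)) by rewrite -map_cat vs_cat.
    rewrite Hpp (inst_ren (n := n + m) (r := dbl) (Hvl _ Hd)) ?size_map ?size_vs ?size_iota //;
      last by move=> i Hi; rewrite dbl_nth.
    rewrite (eval_dbl _ HV); apply: (eval_ext_lt (Hvl _ Hd)) => i Hi.
    by rewrite /h0 catA nth_catl // size_cat.
  exact: map_In.
Qed.

End PC.
End Transfer.

Lemma map_eval_inst {L : lang} (A : algebra L) (a0 : A) (u : nat -> A) (Ts W : seq (term L)) :
  (forall d, List.In d W -> vars_lt (size Ts) d) ->
  map (eval u) (map (inst Ts) W) = map (eval (nth a0 (map (eval u) Ts))) W.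
Proof.
elim: W => [|d W IH] //= H; congr cons; last by apply: IH => e He; apply: H; right.
rewrite eval_inst; apply: (eval_ext_lt (H d (or_introl erefl))) => i Hi.
by rewrite (nth_map (Var 0)).
Qed.

Lemma gens_spec {L : lang} (lg : logic L) (A : algebra L) (G : A -> Prop) :
  (exists l, l <> [::] /\ G = Fg lg (setl l)) ->
  gens lg G <> [::] /\ G = Fg lg (setl (gens lg G)).
Proof. move=> H; exact: (epsilon_spec (inhabits [::]) _ H). Qed.

Lemma Fg_union_cat {L : lang} (lg : logic L) (A : algebra L) (X Y : seq A) :
  Fg lg (union (Fg lg (setl X)) (Fg lg (setl Y))) = Fg lg (setl (X ++ Y)).
Proof.
apply: pext => a; split.
- apply: Fg_min; first exact: Fg_filter.
  move=> x [Hx|Hx]; apply: Fg_mono Hx => w Hw; apply: List.in_or_app; by [left|right].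
- apply: Fg_min; first exact: Fg_filter.
  move=> x /in_app [Hx|Hx]; apply: Fg_incl; [left|right]; exact: Fg_incl.
Qed.

Lemma size_pos (T : Type) (l : seq T) : (0 < size l)%N -> l <> [::].
Proof. by case: l. Qed.

Section Interp.
Context {L : lang} (lg : logic L) (Dl : seq (term L))
  (HD1 : forall d, List.In d Dl -> vars_lt 2 d)
  (HD2 : entails_all lg (@emptyset _) (map (inst [:: Var 0; Var 0]) Dl))
  (HD3 : entails lg (union (setl [:: Var 0]) (setl Dl)) (Var 1)).
Context (top : term L) (neg : nat -> seq (term L)) (imp disj : nat -> nat -> seq (term L))
  (Htop : is_theorem lg top).
Variable A : algebra L.
Variables (g : nat -> A -> Prop) (k : nat) (gam : nat -> nat -> term L) (u : nat -> A).
Hypothesis Hk : (0 < k)%N.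

Notation cmp := (compatible lg neg imp disj).
Notation tr := (trans top neg imp disj k gam).
Notation itp := (interp lg neg imp disj g).

Lemma interp_trans phi : cmp phi ->
  (forall m, occurs m phi -> g m = Fg lg (setl (map (eval u) (mkseq (gam m) k)))) ->
  itp phi = Fg lg (setl (map (eval u) (tr phi))) /\ (0 < size (tr phi))%N.
Proof.
elim: phi => [m|a IHa c IHc|a IHa c IHc|a IHa c IHc|a IHa| |] [CIL [CDT CPC]] Hg /=.
- by rewrite size_mkseq; split => //; apply: Hg.
- have [Ea Sa] := IHa (conj (fun h => CIL (or_introl h)) (conj (fun h => CDT (or_introl h)) (fun h => CPC (or_introl h)))) (fun m h => Hg m (or_introl h)).
  have [Ec Sc] := IHc (conj (fun h => CIL (or_intror h)) (conj (fun h => CDT (or_intror h)) (fun h => CPC (or_intror h)))) (fun m h => Hg m (or_intror h)).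
  by rewrite Ea Ec Fg_union_cat map_cat size_cat; split => //; lia.
- have HPC : PC_witness lg disj by exact: CPC.
  have [Ea Sa] := IHa (conj (fun h => CIL (or_introl h)) (conj (fun h => CDT (or_introl h)) (fun _ => HPC))) (fun m h => Hg m (or_introl h)).
  have [Ec Sc] := IHc (conj (fun h => CIL (or_intror h)) (conj (fun h => CDT (or_intror h)) (fun _ => HPC))) (fun m h => Hg m (or_intror h)).
  set Ta := tr a; set Tc := tr c.
  case: (HPC _ _ Sa Sc) => Hne [Hvl _].
  rewrite (map_eval_inst (u 0)); last by move=> d Hd; rewrite size_cat; apply: Hvl.
  rewrite map_cat; split; last by rewrite size_map; case: (disj _ _) Hne.
  have Hs1 : size Ta = size (map (eval u) Ta) by rewrite size_map.
  have Hs2 : size Tc = size (map (eval u) Tc) by rewrite size_map.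
  have Sa' := Sa; have Sc' := Sc; rewrite Hs1 in Sa'; rewrite Hs2 in Sc'.
  rewrite Hs1 Hs2 Ea Ec; apply: pext => x; split.
  + case=> H1 H2; exact: (PC_out HD1 HD2 HD3 HPC Sa' Sc' H1 H2).
  + move=> H; exact: (PC_in HPC Sa' Sc' H).
- have HDT : DT_witness lg imp by exact: CDT.
  have [Ea Sa] := IHa (conj (fun h => CIL (or_introl h)) (conj (fun _ => HDT) (fun h => CPC (or_introl h)))) (fun m h => Hg m (or_introl h)).
  have [Ec Sc] := IHc (conj (fun h => CIL (or_intror h)) (conj (fun _ => HDT) (fun h => CPC (or_intror h)))) (fun m h => Hg m (or_intror h)).
  set Ta := tr a; set Tc := tr c.
  case: (HDT _ _ Sa Sc) => Hne [Hvl _].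
  rewrite (map_eval_inst (u 0)); last by move=> d Hd; rewrite size_cat; apply: Hvl.
  rewrite map_cat; split; last by rewrite size_map; case: (imp _ _) Hne.
  have Hs1 : size Ta = size (map (eval u) Ta) by rewrite size_map.
  have Hs2 : size Tc = size (map (eval u) Tc) by rewrite size_map.
  have Sa' := Sa; have Sc' := Sc; rewrite Hs1 in Sa'; rewrite Hs2 in Sc'.
  have [G1 G2] := gens_spec (ex_intro _ _ (conj (size_pos Sa') Ea)).
  have [G3 G4] := gens_spec (ex_intro _ _ (conj (size_pos Sc') Ec)).
  move: G1 G2 G3 G4.
  case: (gens lg (itp a)) => [//|a1 r1] _ G2.
  case: (gens lg (itp c)) => [//|a2 r2] _ G4 /=.
  rewrite Hs1 Hs2; apply: pext => x.
  have E1 : Fg lg (setl (a1 :: r1)) = Fg lg (setl (map (eval u) Ta)) by rewrite -G2 Ea.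
  have E2 : Fg lg (setl (a2 :: r2)) = Fg lg (setl (map (eval u) Tc)) by rewrite -G4 Ec.
  split.
    move=> H; exact: (@DT_sub _ lg Dl HD1 HD2 HD3 A imp HDT (u 0) a1 (map (eval u) Ta) (map (eval u) Tc) (a1 :: r1) (a2 :: r2) Sa' Sc' erefl erefl (esym E1) (esym E2) x H).
  + move=> H; exact: (@DT_sub _ lg Dl HD1 HD2 HD3 A imp HDT a1 (u 0) (a1 :: r1) (a2 :: r2) (map (eval u) Ta) (map (eval u) Tc) erefl erefl Sa' Sc' E1 E2 x H).
- have HIL : IL_witness lg neg by exact: CIL.
  have [Ea Sa] := IHa (conj (fun _ => HIL) (conj CDT CPC)) Hg.
  set Ta := tr a.
  case: (HIL _ Sa) => Hne [Hvl _].
  rewrite (map_eval_inst (u 0)) //.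
  split; last by rewrite size_map; case: (neg _) Hne.
  have Hs1 : size Ta = size (map (eval u) Ta) by rewrite size_map.
  have Sa' := Sa; rewrite Hs1 in Sa'.
  have [G1 G2] := gens_spec (ex_intro _ _ (conj (size_pos Sa') Ea)).
  move: G1 G2; case: (gens lg (itp a)) => [//|a1 r1] _ G2 /=.
  rewrite Hs1; apply: (IL_wd HD1 HD2 HD3 HIL) => //.
  by rewrite -G2 Ea.
- have HIL : IL_witness lg neg by exact: CIL.
  case: (HIL 1 erefl) => Hne [Hvl _].
  rewrite (map_eval_inst (u 0)) //; split; last by [].
  apply: pext => e; split => // _.
  have := IL_full HIL (a0 := u 0) (l := [:: eval u (gam 0 0)]) erefl e.
  apply: Fg_mono => x [Hx|Hx].
  + right; exact: Hx.
  + by left; case: Hx => // <-.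
- split => //; apply: pext => x; split.
  + apply: Fg_mono => w [].
  + apply: Fg_min; first exact: Fg_filter.
    move=> w [<-|[]]; apply: Fg_thm.
    have := entails_struct (fun i => nth (Var 0) [:: gam 0 0] i) (proj2 Htop).
    apply: ent_mono => t [v [[] _]].
Qed.

End Interp.

Lemma map_ext_In (T U : Type) (f g : T -> U) (l : seq T) :
  (forall x, List.In x l -> f x = g x) -> map f l = map g l.
Proof. elim: l => [|a l IH] //= H; rewrite H ?IH //; [move=> x Hx; apply: H; by right|by left]. Qed.

Lemma inst_subst {L : lang} (s : nat -> term L) (l : seq (term L)) d :
  vars_lt (size l) d -> inst (map (subst s) l) d = subst s (inst l d).
Proof.
move=> Hd; rewrite /inst subst_subst; apply: (subst_ext_lt Hd) => i Hi.
by rewrite (nth_map (Var 0)).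
Qed.

Section TransSubst.
Context {L : lang} (lg : logic L) (top : term L) (neg : nat -> seq (term L))
  (imp disj : nat -> nat -> seq (term L)) (Htop : is_theorem lg top).
Notation cmp := (compatible lg neg imp disj).

Lemma cmp_and a c : cmp (IAnd a c) -> cmp a /\ cmp c.
Proof. move=> [H1 [H2 H3]]; split; (split; [|split]) => h; [apply: H1|apply: H2|apply: H3|apply: H1|apply: H2|apply: H3]; by [left|right|]. Qed.
Lemma cmp_or a c : cmp (IOr a c) -> cmp a /\ cmp c.
Proof. move=> [H1 [H2 H3]]; split; (split; [|split]) => h; [apply: H1|apply: H2|apply: H3|apply: H1|apply: H2|apply: H3]; by [left|right|]. Qed.
Lemma cmp_imp a c : cmp (IImp a c) -> cmp a /\ cmp c.
Proof. move=> [H1 [H2 H3]]; split; (split; [|split]) => h; [apply: H1|apply: H2|apply: H3|apply: H1|apply: H2|apply: H3]; by [left|right|]. Qed.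
Lemma cmp_neg a : cmp (INeg a) -> cmp a.
Proof. move=> [H1 [H2 H3]]; split; [|split] => h; [apply: H1|apply: H2|apply: H3]; by []. Qed.

Lemma trans_size k gam phi : (0 < k)%N -> cmp phi -> (0 < size (trans top neg imp disj k gam phi))%N.
Proof.
move=> Hk; elim: phi => [m|a IHa c IHc|a IHa c IHc|a IHa c IHc|a IHa| |] [CIL [CDT CPC]] /=.
- by rewrite size_mkseq.
- rewrite size_cat; have := IHa (conj (fun h => CIL (or_introl h)) (conj (fun h => CDT (or_introl h)) (fun h => CPC (or_introl h)))); lia.
- have HPC : PC_witness lg disj by exact: CPC.
  have Sa := IHa (conj (fun h => CIL (or_introl h)) (conj (fun h => CDT (or_introl h)) (fun _ => HPC))).
  have Sc := IHc (conj (fun h => CIL (or_intror h)) (conj (fun h => CDT (or_intror h)) (fun _ => HPC))).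
  case: (HPC _ _ Sa Sc) => Hne _; rewrite size_map; by case: (disj _ _) Hne.
- have HDT : DT_witness lg imp by exact: CDT.
  have Sa := IHa (conj (fun h => CIL (or_introl h)) (conj (fun _ => HDT) (fun h => CPC (or_introl h)))).
  have Sc := IHc (conj (fun h => CIL (or_intror h)) (conj (fun _ => HDT) (fun h => CPC (or_intror h)))).
  case: (HDT _ _ Sa Sc) => Hne _; rewrite size_map; by case: (imp _ _) Hne.
- have HIL : IL_witness lg neg by exact: CIL.
  have Sa := IHa (conj (fun _ => HIL) (conj CDT CPC)).
  case: (HIL _ Sa) => Hne _; rewrite size_map; by case: (neg _) Hne.
- by [].
- by [].
Qed.

Lemma trans_subst k gam (s : nat -> term L) phi : (0 < k)%N -> cmp phi ->
  trans top neg imp disj k (fun m j => subst s (gam m j)) phi =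
  map (subst s) (trans top neg imp disj k gam phi).
Proof.
move=> Hk; elim: phi => [m|a IHa c IHc|a IHa c IHc|a IHa c IHc|a IHa| |] [CIL [CDT CPC]] /=.
- by rewrite /mkseq -map_comp.
- by case: (cmp_and (conj CIL (conj CDT CPC))) => Ca Cc; rewrite map_cat IHa ?IHc.
- have HPC : PC_witness lg disj by exact: CPC.
  case: (cmp_or (conj CIL (conj CDT CPC))) => Ca Cc.
  rewrite IHa // IHc // !size_map -map_cat -map_comp.
  case: (HPC _ _ (trans_size gam Hk Ca) (trans_size gam Hk Cc)) => _ [Hvl _].
  apply: map_ext_In => d Hd /=; apply: inst_subst; rewrite size_cat; exact: Hvl.
- have HDT : DT_witness lg imp by exact: CDT.
  case: (cmp_imp (conj CIL (conj CDT CPC))) => Ca Cc.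
  rewrite IHa // IHc // !size_map -map_cat -map_comp.
  case: (HDT _ _ (trans_size gam Hk Ca) (trans_size gam Hk Cc)) => _ [Hvl _].
  apply: map_ext_In => d Hd /=; apply: inst_subst; rewrite size_cat; exact: Hvl.
- have HIL : IL_witness lg neg by exact: CIL.
  have Ca := cmp_neg (conj CIL (conj CDT CPC)).
  rewrite IHa // !size_map -map_comp.
  case: (HIL _ (trans_size gam Hk Ca)) => _ [Hvl _].
  apply: map_ext_In => d Hd /=; apply: inst_subst; exact: Hvl.
- have HIL : IL_witness lg neg by exact: CIL.
  case: (HIL 1 erefl) => _ [Hvl _].
  congr cons; rewrite -map_comp; apply: map_ext_In => d Hd /=.
  exact: (@inst_subst _ s [:: gam 0 0] d (Hvl d Hd)).
- congr cons; exact: (@inst_subst _ s [:: gam 0 0] top (proj1 Htop)).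
Qed.

End TransSubst.

Fixpoint maxocc (phi : ipc) : nat :=
  match phi with
  | IVar m => m.+1
  | IAnd a c | IOr a c | IImp a c => maxn (maxocc a) (maxocc c)
  | INeg a => maxocc a
  | IBot | ITop => 0
  end.

Lemma occurs_max m phi : occurs m phi -> (m < maxocc phi)%N.
Proof.
elim: phi => [j|a IHa c IHc|a IHa c IHc|a IHa c IHc|a IHa| |] //=.
- move=> ->; lia.
- case=> H; [have := IHa H|have := IHc H]; lia.
- case=> H; [have := IHa H|have := IHc H]; lia.
- case=> H; [have := IHa H|have := IHc H]; lia.
Qed.

Lemma maxocc_list (phis : seq ipc) phi :
  List.In phi phis -> (maxocc phi <= foldr (fun p acc => maxn (maxocc p) acc) 0 phis)%N.
Proof. elim: phis => [|p ps IH] //= [->|H]; [lia|have := IH H; lia]. Qed.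

Lemma In_nseq (T : Type) n (e x : T) : List.In x (nseq n e) -> x = e.
Proof. elim: n => [|n IH] //= [->|H] //; exact: IH. Qed.

Lemma Fg_fa_ent {L : lang} (lg : logic L) (G : term L -> Prop) psi :
  Fg lg (A := formula_alg L) G psi -> entails lg G psi.
Proof.
apply: Fg_min; last by move=> x Hx; apply: ent_refl.
move=> D phi H h HD; rewrite /= eval_fa.
have := entails_struct h H; apply: ent_cut => t [w [Hw ->]].
rewrite -eval_fa; exact: HD.
Qed.

Lemma map_eval_Var {L : lang} (l : seq (term L)) : map (@eval L (formula_alg L) (@Var L)) l = l.
Proof. elim: l => //= a l ->; by rewrite eval_Var. Qed.

Section Main.
Context {L : lang} (lg : logic L) (Dl : seq (term L))
  (HD1 : forall d, List.In d Dl -> vars_lt 2 d)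
  (HD2 : entails_all lg (@emptyset _) (map (inst [:: Var 0; Var 0]) Dl))
  (HD3 : entails lg (union (setl [:: Var 0]) (setl Dl)) (Var 1)).
Context (top : term L) (neg : nat -> seq (term L)) (imp disj : nat -> nat -> seq (term L))
  (Htop : is_theorem lg top) (phis : seq ipc) (y z : nat)
  (Hsq : sahlqvist_qe phis y z)
  (Hcmp : forall phi, List.In phi phis -> compatible lg neg imp disj phi).

Lemma ii_to_i : validates_qe lg neg imp disj (formula_alg L) phis y z ->
  validates_metarules lg top neg imp disj phis.
Proof.
move=> Hqe k Hk G psi gam Hprem.
case: Hsq => Hyz Hphis.
pose g := fun m => if m == y then Fg lg (A := formula_alg L) (setl G)
                   else if m == z then Fg lg (A := formula_alg L) (setl [:: psi])
                   else Fg lg (A := formula_alg L) (setl (mkseq (gam m) k)).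
have Hgy : g y = Fg lg (A := formula_alg L) (setl G) by rewrite /g eqxx.
have Hgz : g z = Fg lg (A := formula_alg L) (setl [:: psi]).
  rewrite /g eqxx; case: eqP => // E; by case: Hyz.
have Hfin : forall m, fin_gen lg (g m).
  move=> m; rewrite /g; case: (m == y); first by exists G.
  case: (m == z); [by exists [:: psi]|by exists (mkseq (gam m) k)].
have := Hqe g Hfin.
move=> /(_ _) /=; rewrite Hgy Hgz => H.
have : Fg lg (A := formula_alg L) (setl G) psi.
  rewrite -[in X in X psi]H; first by apply: Fg_incl; right; apply: Fg_incl; left.
  move=> phi Hphi.
  case: (Hphis phi Hphi) => _ [Hny Hnz].
  have Hgm : forall m, occurs m phi ->
      g m = Fg lg (setl (map (@eval L (formula_alg L) (@Var L)) (mkseq (gam m) k))).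
    move=> m Hm.
    have Hmy : m != y by apply/eqP => E; apply: Hny; rewrite -E.
    have Hmz : m != z by apply/eqP => E; apply: Hnz; rewrite -E.
    rewrite /g (negbTE Hmy) (negbTE Hmz).
    by rewrite map_eval_Var.
  have [E _] := interp_trans HD1 HD2 HD3 Htop (g := g) (gam := gam) (u := @Var L) Hk (Hcmp Hphi) Hgm.
  rewrite E; set X := Fg lg (union _ _); apply: pext => x; split.
  * apply: Fg_min; first exact: Fg_filter.
    move=> w [Hw|Hw]; first exact: Hw.
    apply: Fg_min Hw; first exact: Fg_filter.
    move=> w' [<-|[]]; rewrite /X.
    have := @filter_ent L lg (formula_alg L) _ _ _ (@Var L) (@Fg_filter _ lg (formula_alg L) (union (Fg lg (A:=formula_alg L) (setl (map (@eval L (formula_alg L) (@Var L)) (trans top neg imp disj k gam phi)))) (Fg lg (A:=formula_alg L) (setl G)))) (Hprem phi Hphi).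
    rewrite eval_Var; apply => t [Ht|Ht]; rewrite eval_Var; apply: Fg_incl.
    - by right; apply: Fg_incl.
    - by left; apply: Fg_incl; rewrite map_eval_Var.
  * by move=> Hx; rewrite /X; apply: Fg_incl; left.
exact: Fg_fa_ent.
Qed.


Lemma i_to_iii : validates_metarules lg top neg imp disj phis ->
  forall A : algebra L, validates_qe lg neg imp disj A phis y z.
Proof.
move=> Hmr A g Hfin Hyp /=.
case: Hsq => Hyz Hphis.
case: (classic (exists a : A, True)) => [[a0 _]|HA]; last first.
  by apply: pext => a; exfalso; apply: HA; exists a.
pose lf m := proj1_sig (constructive_indefinite_description _ (Hfin m)).
have Hlf : forall m, g m = Fg lg (setl (lf m)).
  by move=> m; rewrite /lf; case: (constructive_indefinite_description _ (Hfin m)).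
set Mb := foldr (fun p acc => maxn (maxocc p) acc) 0 phis.
set k := (\max_(m < Mb) size (lf m)).+1.
have Hk : (0 < k)%N by [].
have Hszk : forall m, (m < Mb)%N -> (size (lf m) < k)%N.
  move=> m Hm; rewrite ltnS.
  exact: (leq_bigmax (F := fun i : 'I_Mb => size (lf i)) (Ordinal Hm)).
set e0 := eval (fun _ => a0) top.
pose pad m := lf m ++ nseq (k - size (lf m)) e0.
have Hpad : forall m, (m < Mb)%N -> size (pad m) = k /\ Fg lg (setl (pad m)) = g m.
  move=> m Hm; have := Hszk m Hm => Hs; split.
    rewrite /pad size_cat size_nseq; lia.
  rewrite Hlf; apply: pext => x; split.
  - apply: Fg_min; first exact: Fg_filter.
    move=> w /in_app [Hw|Hw]; first exact: Fg_incl.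
    rewrite (In_nseq Hw); apply: Fg_thm; exact: (proj2 Htop).
  - apply: Fg_mono => w Hw; apply: List.in_or_app; by left.
suff Hzy : forall c, g z c -> g y c.
  apply: pext => x; split; last by move=> Hx; apply: Fg_incl; left.
  rewrite {2}(Hlf y); apply: Fg_min; first exact: Fg_filter.
  by move=> w [Hw|Hw]; rewrite -Hlf //; apply: Hzy.
move=> c Hc.
set ly := lf y.
pose h0 i := if odd i then nth c ly i./2 else nth a0 (pad (i./2 %/ k)) (i./2 %% k).
pose gam m j := @Var L ((m * k + j).*2).
have Hgam : forall m, (m < Mb)%N -> map (eval h0) (mkseq (gam m) k) = pad m.
  move=> m Hm; have [Hs _] := Hpad m Hm.
  rewrite -[RHS](mkseq_nth a0 (pad m)) Hs /mkseq -map_comp.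
  apply/eq_in_map => j; rewrite mem_iota add0n => /andP [_ Hj].
  rewrite /= /h0 odd_double doubleK divnMDl // divn_small // addn0.
  by rewrite modnMDl modn_small.
have Hg' : forall phi, List.In phi phis -> forall m, occurs m phi ->
    g m = Fg lg (setl (map (eval h0) (mkseq (gam m) k))).
  move=> phi Hphi m Hm.
  have Hm' : (m < Mb)%N.
    have := occurs_max Hm; have := maxocc_list Hphi; rewrite -/Mb; lia.
  by rewrite Hgam // (proj2 (Hpad m Hm')).
set yv := map (fun j => @Var L (j.*2.+1)) (iota 0 (size ly)).
have Hyv : map (eval h0) yv = ly.
  rewrite /yv -map_comp.
  have -> : [seq (eval h0 \o (fun j => @Var L j.*2.+1)) i | i <- iota 0 (size ly)] =
            [seq nth c ly i | i <- iota 0 (size ly)].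
    apply: eq_map => j; by rewrite /= /h0 /= odd_double /= uphalf_double.
  by rewrite map_nth_iota0 // take_size.
set t := @Var L ((size ly).*2.+1).
have Ht : eval h0 t = c.
  by rewrite /= /h0 /= odd_double /= uphalf_double nth_default.
set n := size phis.
set P := fun i => trans top neg imp disj k gam (nth ITop phis i) ++ yv.
have Hhyp : forall i, (i < n)%N -> Fg lg (setl (map (eval h0) (P i))) (eval h0 t).
  move=> i Hi; set phi := nth ITop phis i.
  have Hphi : List.In phi phis by exact: nth_In.
  have [E _] := interp_trans HD1 HD2 HD3 Htop (g := g) (gam := gam) (u := h0) Hk (Hcmp Hphi) (Hg' _ Hphi).
  have := Hyp phi Hphi; rewrite /= => H.
  have : Fg lg (union (Fg lg (union (interp lg neg imp disj g phi) (g y)))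
                 (g z)) c by apply: Fg_incl; right.
  have Ht2 : h0 (size ly).*2.+1 = c := Ht.
  rewrite H E Hlf Fg_union_cat Ht2 /P map_cat Hyv; exact.
have [V [Pi [HV [HPi Hent]]]] := norm HD1 HD2 HD3 a0 Hhyp.
set G' := List.flat_map Pi (iota 0 n) ++ map (ren dbl) yv.
pose gam' := fun m j => subst (fun i => @Var L (dbl i)) (gam m j).
have Hent' := Hmr k Hk G' (ren dbl t) gam'.
have Hfin' : entails lg (setl G') (ren dbl t).
  apply: Hent' => phi Hphi.
  rewrite /gam' (trans_subst Htop gam (fun i => Var (dbl i)) Hk (Hcmp Hphi)).
  case: (In_nth ITop Hphi) => i [Hi Hn].
  apply: ent_mono (Hent i Hi) => w /in_app [Hw|Hw].
  - left; apply: List.in_or_app; left; apply/List.in_flat_map; exists i; split => //.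
    apply: iota_In; lia.
  - rewrite /P map_cat Hn in Hw; case/in_app: Hw => Hw; first by right.
    left; apply: List.in_or_app; by right.
rewrite Hlf -Ht -(eval_dbl _ HV).
apply: (filter_ent (@Fg_filter _ lg A _) Hfin') => w /in_app [Hw|Hw].
- case/List.in_flat_map: Hw => i [Hi Hw]; apply: Fg0_sub; apply: (HPi i) => //.
  have := In_iota Hi; lia.
- case: (in_mapP Hw) => w' [<- Hw']; case: (in_mapP Hw') => j [<- Hj].
  rewrite (eval_dbl _ HV) /= /h0 /= odd_double /= uphalf_double.
  apply: Fg_incl; apply: nth_In; have := In_iota Hj; lia.
Qed.

End Main.

Theorem proposition7p10 (L : lang) (lg : logic L) (top : term L)
    (neg : nat -> seq (term L)) (imp disj : nat -> nat -> seq (term L))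
    (phis : seq ipc) (y z : nat) :
  protoalgebraic lg ->
  is_theorem lg top ->
  sahlqvist_qe phis y z ->
  (forall phi, List.In phi phis -> compatible lg neg imp disj phi) ->
  (validates_metarules lg top neg imp disj phis <->
   validates_qe lg neg imp disj (formula_alg L) phis y z) /\
  (validates_qe lg neg imp disj (formula_alg L) phis y z <->
   (forall A : algebra L, validates_qe lg neg imp disj A phis y z)).
Proof.
move=> [Dl [_ [HD1 [HD2 HD3]]]] Htop Hsq Hcmp.
have H13 := i_to_iii HD1 HD2 HD3 Htop Hsq Hcmp.
have H21 := ii_to_i HD1 HD2 HD3 Htop Hsq Hcmp.
split; split.
- move=> H; exact: H13.
- exact: H21.
- move=> H; apply: H13; exact: H21.
- move=> H; exact: H.
Qed.
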